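(* Let $\Phi\subset\mathbb{C}$ be a symbol constellation with at least two distinct points, let $\sigma^2>0$, and let $M\geq 2$ be a power of $2$. Consider the AVC corresponding to securely precoded OFDM (SP-OFDM), with input alphabet $\Phi$, state (jamming) alphabet $\mathbb{C}$ and output $R = S + e^{j\Theta}J + N$, where $\Theta$ is uniformly distributed on $\{2\pi i/M : i=0,1,\dots,M-1\}$, $N\sim\mathcal{CN}(0,\sigma^2)$, and $\Theta$, $N$ are independent of each other and of $(S,J)$; i.e. its transition density is $W(r\mid s,x)=\frac{1}{M}\sum_{i=0}^{M-1}\frac{1}{\pi\sigma^2}\exp\!\big(-|r-s-x e^{j2\pi i/M}|^2/\sigma^2\big)$. Then there is no auxiliary channel $\pi:\Phi\to\mathbb{C}$ that symmetrizes this AVC (the set of symmetrizing channels is empty); in particular the AVC is not $l$-symmetrizable.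
   Context: Definitions (Csiszár–Narayan). Let $W(r\mid s,x)$ be the conditional density of the channel output $R\in\mathbb{C}$ given input $s\in\Phi$ and state $x\in\mathbb{C}$. An auxiliary channel $\pi:\Phi\to\mathbb{C}$ is a family of probability measures $F_\pi(\cdot\mid s)$ on $\mathbb{C}$, $s\in\Phi$. The AVC is symmetrizable via $\pi$ if for all $s,s'\in\Phi$ and all $r\in\mathbb{C}$, $\int_{\mathbb{C}} W(r\mid s,x)\,dF_\pi(x\mid s')=\int_{\mathbb{C}} W(r\mid s',x)\,dF_\pi(x\mid s)$. The AVC is $l$-symmetrizable (under an average jamming power constraint) if there is such a symmetrizing $\pi$ with $\int_{\mathbb{C}}|x|^2\,dF_\pi(x\mid s)<\infty$ for all $s\in\Phi$. *)

(* Defs.v *)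
(* The complex plane C is modelled as R * R
   (real part, imaginary part) with its product (= Borel) sigma-algebra. *)
From HB Require Import structures.
From mathcomp Require Import all_boot all_order all_algebra.
From mathcomp Require Import all_classical all_reals all_analysis.
Set Implicit Arguments. Unset Strict Implicit. Unset Printing Implicit Defensive.
Import Order.TTheory GRing.Theory Num.Theory.
Local Open Scope ring_scope.

Section Defs.
Variable R : realType.

Definition cplx := (R * R)%type.
Definition csub (z w : cplx) : cplx := (z.1 - w.1, z.2 - w.2).
Definition cmul (z w : cplx) : cplx :=
  (z.1 * w.1 - z.2 * w.2, z.1 * w.2 + z.2 * w.1).
Definition cexpi (t : R) : cplx := (cos t, sin t).
Definition cabs2 (z : cplx) : R := z.1 ^+ 2 + z.2 ^+ 2.

Definition W_SP (sigma2 : R) (M : nat) (r s x : cplx) : R :=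
  M%:R^-1 * \sum_(i < M)
    ((pi * sigma2)^-1 *
      expR (- cabs2 (csub (csub r s) (cmul x (cexpi (2 * pi * i%:R / M%:R)))) / sigma2)).

Definition symmetrizes (Phi : set cplx) (W : cplx -> cplx -> cplx -> R)
  (F : cplx -> probability cplx R) : Prop :=
  forall s s', Phi s -> Phi s' -> forall r : cplx,
    (\int[F s']_x (W r s x)%:E = \int[F s]_x (W r s' x)%:E)%E.

Definition symmetrizable Phi W : Prop := exists F, symmetrizes Phi W F.

Definition l_symmetrizable Phi W : Prop :=
  exists F, symmetrizes Phi W F /\
    forall s, Phi s -> (\int[F s]_x (cabs2 x)%:E < +oo)%E.
End Defs.

(* Main.v *)
Require Import Defs.
From HB Require Import structures.
From mathcomp Require Import all_boot all_order all_algebra.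
From mathcomp Require Import all_classical all_reals all_analysis.
From mathcomp Require Import ring lra.
Import Order.TTheory GRing.Theory Num.Theory.
Local Open Scope classical_set_scope.
Local Open Scope ring_scope.

Section Alg.
Variable R : realType.
Implicit Types z w u v : cplx R.
Local Notation cabs2 := (@cabs2 R).
Local Notation cmul := (@cmul R).
Local Notation csub := (@csub R).

Lemma cabs2_mul z w : cabs2 (cmul z w) = cabs2 z * cabs2 w.
Proof. rewrite /cabs2 /cmul /=; ring. Qed.

Lemma cabs2_expi t : cabs2 (cexpi t) = 1.
Proof. by rewrite /cabs2 /cexpi /= cos2Dsin2. Qed.

Lemma cabs2_ge0 z : 0 <= cabs2 z.
Proof. by rewrite /cabs2 addr_ge0 // sqr_ge0. Qed.

Variable M : nat.
Hypothesis M0 : (0 < M)%N.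

Definition om (n : nat) : cplx R := cexpi (2 * pi * n%:R / M%:R).

Lemma om_S n : cmul (om 1) (om n) = om n.+1.
Proof.
rewrite /om /cexpi /cmul /=.
have -> : 2 * pi * n.+1%:R / M%:R = 2 * pi * 1%:R / M%:R + 2 * pi * n%:R / M%:R :> R.
  by rewrite -natr1; ring.
by rewrite cosD sinD; congr pair; ring.
Qed.

Lemma om_0 : om 0 = (1, 0).
Proof. by rewrite /om /cexpi mulr0 mul0r cos0 sin0. Qed.

Lemma om_M : om M = (1, 0).
Proof.
rewrite /om /cexpi mulfK; last by rewrite pnatr_eq0 -lt0n.
by rewrite mulr_natl cos2pi sin2pi.
Qed.

Lemma om_inv : cmul (om 1) (om M.-1) = (1, 0).
Proof. by rewrite om_S prednK // om_M. Qed.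

Definition cadd (z w : cplx R) : cplx R := (z.1 + w.1, z.2 + w.2).

Lemma csub0 z : csub z (0, 0) = z.
Proof. by case: z => a b; rewrite /csub /= !subr0. Qed.

Lemma cmul_add z u v : cmul z (cadd u v) = cadd (cmul z u) (cmul z v).
Proof. rewrite /cmul /cadd /=; congr pair; ring. Qed.

Lemma csub_add_r v a : csub (cadd v a) a = v.
Proof. case: v => ? ?; rewrite /csub /cadd /=; congr pair; ring. Qed.

Lemma csub_add v a b : csub (cadd v a) b = cadd v (csub a b).
Proof. rewrite /csub /cadd /=; congr pair; ring. Qed.

Lemma cmul1 z : cmul (1, 0) z = z.
Proof. case: z => a b; rewrite /cmul /=; congr pair; ring. Qed.

Lemma cmulA z w u : cmul z (cmul w u) = cmul (cmul z w) u.
Proof. rewrite /cmul /=; congr pair; ring. Qed.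

Lemma cmulC z w : cmul z w = cmul w z.
Proof. rewrite /cmul /=; congr pair; ring. Qed.

Lemma csub_mul z u x v :
  csub (cmul z u) (cmul x (cmul z v)) = cmul z (csub u (cmul x v)).
Proof. rewrite /cmul /csub /=; congr pair; ring. Qed.

Variable sig : R.

Definition term (x u : cplx R) (n : nat) : R :=
  expR (- cabs2 (csub u (cmul x (om n))) / sig).

Definition K (u x : cplx R) : R := \sum_(i < M) term x u i.

Lemma term_rot x u n w : om n = cmul (om 1) w ->
  expR (- cabs2 (csub (cmul (om 1) u) (cmul x (om n))) / sig) =
  expR (- cabs2 (csub u (cmul x w)) / sig).
Proof.
move=> ->; rewrite csub_mul cabs2_mul /om cabs2_expi mul1r //.
Qed.

Lemma K_rot u x : K (cmul (om 1) u) x = K u x.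
Proof.
rewrite /K /term.
have [M' eM] : exists M', M = M'.+1 by exists M.-1; rewrite prednK.
move: (om_inv); rewrite eM /= => hinv.
rewrite big_ord_recl big_ord_recr /= addrC; congr (_ + _).
  by apply: term_rot; rewrite om_0 hinv.
apply: eq_bigr => i _.
by apply: term_rot; rewrite om_S.
Qed.

Lemma W_K (r s x : cplx R) :
  W_SP sig M r s x = M%:R^-1 * (pi * sig)^-1 * K (csub r s) x.
Proof.
rewrite /W_SP -mulrA; congr (_ * _); rewrite /K mulr_sumr.
by apply: eq_bigr => i _; rewrite /term /om.
Qed.

Lemma W_shift (r s x : cplx R) :
  W_SP sig M r s x = W_SP sig M (csub r s) (0, 0) x.
Proof.
rewrite (W_K r s x) (W_K (csub r s) (0,0) x).
have -> : csub (csub r s) (0, 0) = csub r s.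
  by case: r s => [a b] [c d]; rewrite /csub /= !subr0.
by [].
Qed.

End Alg.
Section Meas.
Variable R : realType.
Local Notation mfD := measurable_realfun.measurable_funD.
Local Notation mfB := measurable_realfun.measurable_funB.
Local Notation mfM := measurable_realfun.measurable_funM.
Local Notation mfX := measurable_realfun.measurable_funX.
Local Notation mfN := measurable_realfun.measurable_funN.

Lemma meas_cabs2 (u w : cplx R) :
  measurable_fun [set: (R * R)%type]
    (fun x : R * R => @cabs2 R (@csub R u (@cmul R x w))).
Proof.
rewrite /cabs2 /csub /cmul /=.
apply: mfD; apply: mfX; apply: mfB; try exact: measurable_cst.
- apply: mfB; apply: mfM; try exact: measurable_cst.
  exact: measurable_fst. exact: measurable_snd.
- apply: mfD; apply: mfM; try exact: measurable_cst.
  exact: measurable_fst. exact: measurable_snd.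
Qed.
End Meas.
Section Ana.
Variable R : realType.

Lemma sq_div (a b : R) : b != 0 -> forall A,
  \forall n \near \oo, A <= (a + n%:R * b) ^+ 2.
Proof.
move=> b0 A.
have nb : 0 < `|b| by rewrite normr_gt0.
exists (Num.Def.trunc ((`|a| + `|A| + 1) / `|b|)).+1 => // n /= hn.
have h1 : (`|a| + `|A| + 1) / `|b| < n%:R.
  apply: lt_le_trans (truncnS_gt _) _; by rewrite ler_nat.
have h2 : `|a| + `|A| + 1 < n%:R * `|b|.
  by rewrite -ltr_pdivrMr.
have h3 : n%:R * `|b| - `|a| <= `|a + n%:R * b|.
  have := lerB_normD (n%:R * b) a.
  rewrite normrM normr_nat (addrC (n%:R * b) a); lra.
have h4 : `|A| + 1 <= `|a + n%:R * b| by lra.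
have h5 : A <= `|A| by exact: ler_norm.
rewrite -real_normK ?num_real //.
have h6 : 0 <= `|a + n%:R * b| by [].
nra.
Qed.

Lemma pair_div (a1 a2 e1 e2 : R) : (e1 != 0) \/ (e2 != 0) ->
  (a1 + n%:R * e1) ^+ 2 + (a2 + n%:R * e2) ^+ 2 @[n --> \oo] --> +oo.
Proof.
move=> he; apply/cvgryPge => A.
case: he => he.
  near=> n.
  have : A <= (a1 + n%:R * e1) ^+ 2 by near: n; exact: sq_div.
  have := sqr_ge0 (a2 + n%:R * e2); lra.
near=> n.
have : A <= (a2 + n%:R * e2) ^+ 2 by near: n; exact: sq_div.
have := sqr_ge0 (a1 + n%:R * e1); lra.
Unshelve. all: by end_near.
Qed.

Lemma exp_cvg0 (q : nat -> R) (sig : R) : 0 < sig ->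
  q n @[n --> \oo] --> +oo -> expR (- q n / sig) @[n --> \oo] --> 0.
Proof.
move=> s0 hq.
have hq' : q n / sig @[n --> \oo] --> +oo.
  apply/cvgryPge => A; move/cvgryPge : hq => /(_ (A * sig)).
  apply: filterS => n hn; by rewrite ler_pdivlMr.
have := cvg_comp _ _ hq' (@cvgr_expR R).
by apply: cvg_trans; apply: near_eq_cvg; near=> n; rewrite /= mulNr.
Unshelve. all: by end_near.
Qed.

Lemma sum_cvg0 (I : Type) (s : seq I) (u : I -> nat -> R) :
  (forall i, u i n @[n --> \oo] --> 0) ->
  \sum_(i <- s) u i n @[n --> \oo] --> 0.
Proof.
move=> hu; elim: s => [|i s IH].
  by under eq_fun do rewrite big_nil; exact: cvg_cst.
under eq_fun do rewrite big_cons.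
apply: cvg_trans (cvgD (hu i) IH) _; rewrite addr0; exact: cvg_id.
Qed.

Local Open Scope ereal_scope.

Lemma dct0 (P : probability (R * R)%type R) (f_ : nat -> R * R -> R) (C : R) :
  (forall n, measurable_fun setT (f_ n)) ->
  (forall n x, (0 <= f_ n x <= C)%R) ->
  (forall x, (f_ n x @[n --> \oo] --> 0%R)) ->
  \int[P]_x (f_ n x)%:E @[n --> \oo] --> 0.
Proof.
move=> mf hb hc.
have := @dominated_convergence _ _ R P setT measurableT
  (fun n x => (f_ n x)%:E) (cst 0) (cst C%:E).
case.
- by move=> n; apply/measurable_realfun.measurable_EFinP.
- exact: measurable_cst.
- apply: aeW => x _; apply/fine_cvgP; split; first by near=> n.
  exact: hc.
- exact: finite_measure_integrable_cst.
- apply: aeW => x n _ /=; have /andP[h0 h1] := hb n x.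
  by rewrite lee_fin ger0_norm.
by move=> _ _; rewrite integral0.
Unshelve. all: by end_near.
Qed.

Lemma int_pos (P : probability (R * R)%type R) (f : R * R -> R) :
  measurable_fun setT f -> (forall x, (0 < f x)%R) ->
  \int[P]_x (f x)%:E <> 0.
Proof.
move=> mf fp h0.
have mEf := (@measurable_realfun.measurable_EFinP _ _ _ _ f).2 mf.
have := (ae_eq_integral_abs P measurableT mEf).1.
case.
  rewrite -h0; apply: eq_integral => x _ /=.
  by rewrite ger0_norm // ltW.
move=> N [mN PN sub].
have : P setT = 0.
  apply: (subset_measure0 _ _ _ PN) => // x _; apply: sub => /= /(_ I).
  by move=> /eqP; rewrite eqe gt_eqF.
by rewrite probability_setT => /eqP; rewrite eqe oner_eq0.
Qed.

End Ana.

Section WLem.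
Variable R : realType.
Variable M : nat.
Hypothesis M0 : (0 < M)%N.
Variable sig : R.
Hypothesis sig0 : 0 < sig.
Local Notation mfM := measurable_realfun.measurable_funM.
Local Notation mfN := measurable_realfun.measurable_funN.

Lemma meas_W (u : cplx R) :
  measurable_fun [set: (R * R)%type] (fun x => W_SP sig M u (0, 0) x).
Proof.
rewrite (_ : (fun x => _) = fun x => M%:R^-1 * (pi * sig)^-1 * @K R M sig (@csub R u (0, 0)) x);
  last by apply: funext => x; rewrite W_K.
apply: mfM; first exact: measurable_cst.
rewrite /K; apply: measurable_sum => i; rewrite /term.
apply: measurableT_comp; first exact: measurable_realfun.measurable_expR.
apply: mfM; last exact: measurable_cst.
apply: mfN; exact: meas_cabs2.
Qed.

Lemma term_bnd x u n : 0 < @term R M sig x u n <= 1.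
Proof.
rewrite /term expR_gt0 /= expR_le1 mulNr oppr_le0.
by rewrite divr_ge0 ?cabs2_ge0 // ltW.
Qed.

Lemma W_bnd r s x : 0 < W_SP sig M r s x <= (pi * sig)^-1.
Proof.
rewrite W_K.
have hc : 0 < (pi * sig)^-1 by rewrite invr_gt0 mulr_gt0 // pi_gt0.
have hM : 0 < M%:R :> R by rewrite ltr0n.
set k := K _ _ _ _ x.
have hK : 0 < k <= M%:R.
  apply/andP; split.
    have [M' eM] : exists M', M = M'.+1 by exists M.-1; rewrite prednK.
    rewrite /k /K; move: (term_bnd).
    rewrite eM => tb; rewrite big_ord_recl.
    have h1 := tb x (csub r s) 0; move/andP: h1 => [h1 _].
    have h2 : 0 <= \sum_(i < M') @term R M'.+1 sig x (csub r s) (bump 0 i).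
      by apply: sumr_ge0 => i _; have /andP[/ltW ? _] := tb x (csub r s) (bump 0 i).
    rewrite /=; lra.
  rewrite /k /K; apply: (@le_trans _ _ (\sum_(i < M) (1:R))).
    by apply: ler_sum => i _; have /andP[_ ?] := term_bnd x (csub r s) i.
  by rewrite sumr_const card_ord.
move/andP: hK => [hK0 hK1].
apply/andP; split.
  by rewrite mulr_gt0 // mulr_gt0 // invr_gt0.
apply: le_trans (ler_wpM2l _ hK1) _.
  by rewrite mulr_ge0 // ltW // invr_gt0.
by rewrite mulrAC mulVf ?mul1r // gt_eqF.
Qed.

Lemma W_cvg0 (a1 a2 e1 e2 : R) x : (e1 != 0) \/ (e2 != 0) ->
  W_SP sig M (a1 + n%:R * e1, a2 + n%:R * e2) (0, 0) x @[n --> \oo] --> 0.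
Proof.
move=> he.
under eq_fun do rewrite W_K.
have h : @K R M sig (@csub R (a1 + n%:R * e1, a2 + n%:R * e2) (0, 0)) x @[n --> \oo] --> 0.
  rewrite /K; apply: sum_cvg0 => i; rewrite /term.
  apply: exp_cvg0 => //.
  set y := cmul x (@om R M i).
  rewrite (_ : (fun n => _) = fun n : nat =>
     ((a1 - y.1) + n%:R * e1) ^+ 2 + ((a2 - y.2) + n%:R * e2) ^+ 2).
    exact: pair_div.
  by apply: funext => n; rewrite /cabs2 /csub /=; congr (_ ^+ 2 + _ ^+ 2); ring.
apply: cvg_trans (cvgMr h) _; rewrite mulr0; exact: cvg_id.
Qed.

End WLem.



Theorem theorem2 (R : realType) (Phi : set (cplx R)) (s0 s1 : cplx R)
  (hs0 : Phi s0) (hs1 : Phi s1) (hne : s0 <> s1)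
  (sigma2 : R) (hsigma : 0 < sigma2)
  (M : nat) (hM : (2 <= M)%N) (hpow : exists k : nat, M = (2 ^ k)%N) :
  (~ exists F : cplx R -> probability (cplx R) R,
       symmetrizes Phi (W_SP sigma2 M) F)
  /\ ~ l_symmetrizable Phi (W_SP sigma2 M).
Proof.
have M0 : (0 < M)%N by apply: leq_trans hM.
have part1 : ~ exists F : cplx R -> probability (cplx R) R,
       symmetrizes Phi (W_SP sigma2 M) F.
  move=> [F hF].
  pose G t u := (\int[F t]_x (W_SP sigma2 M u (0, 0) x)%:E)%E.
  have e1 r t s : (\int[F t]_x (W_SP sigma2 M r s x)%:E)%E = G t (csub r s).
    by apply: eq_integral => x _; rewrite W_shift.
  have hsym r : G s1 (csub r s0) = G s0 (csub r s1).
    by rewrite -!e1; exact: hF.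
  have hrot t u : G t (cmul (@om R M 1) u) = G t u.
    apply: eq_integral => x _; rewrite !W_K !csub0.
    by rewrite K_rot.
  pose rho := @om R M 1.
  pose rho' := @om R M M.-1.
  have hinv : cmul rho rho' = (1, 0) by exact: om_inv.
  pose e := csub (cmul rho (csub s0 s1)) (csub s0 s1).
  have hper w : G s1 w = G s1 (w.1 + e.1, w.2 + e.2).
    pose v := cmul rho' w.
    have hv : cmul rho v = w by rewrite /v cmulA hinv cmul1.
    rewrite -{1}hv hrot.
    have h1 := hsym (@cadd R v s0); rewrite csub_add_r csub_add in h1.
    rewrite h1 -(hrot s0 (@cadd R v (csub s0 s1))).
    have h2 := hsym (@cadd R (cmul rho (@cadd R v (csub s0 s1))) s1).
    rewrite csub_add_r in h2; rewrite -h2.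
    congr (G s1 _); rewrite csub_add cmul_add hv.
    by rewrite /e /cadd /csub /=; congr pair; ring.
  have he : (e.1 != 0) \/ (e.2 != 0).
    have hrho : (rho.1 - 1) ^+ 2 + rho.2 ^+ 2 != 0.
      move: hM; rewrite leq_eqVlt => /orP [/eqP eM | gM].
        rewrite /rho /om /cexpi /= -eM.
        have -> : (2 * pi * 1%:R / 2%:R : R) = pi.
          by rewrite mulr1n mulr1 mulrAC divff ?mul1r // pnatr_eq0.
        rewrite cospi sinpi; apply/negP => /eqP; nra.
      have hs : 0 < rho.2.
        rewrite /rho /om /cexpi /=.
        have hM2 : (2 : R) < M%:R by rewrite ltr_nat.
        have hp := pi_gt0 R.
        apply: sin_gt0_pi; apply/andP; split.
          by rewrite mulr1n mulr1 divr_gt0 // ?mulr_gt0 // ltr0n.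
        rewrite mulr1n mulr1 ltr_pdivrMr ?ltr0n //; nra.
      by rewrite gt_eqF // ltr_wpDl ?sqr_ge0 // exprn_gt0.
    have hd : (s0.1 - s1.1) ^+ 2 + (s0.2 - s1.2) ^+ 2 != 0.
      apply/negP; rewrite paddr_eq0 ?sqr_ge0 // !sqrf_eq0 !subr_eq0.
      move=> /andP[/eqP h1 /eqP h2]; apply: hne.
      by rewrite [s0]surjective_pairing [s1]surjective_pairing h1 h2.
    have key : e.1 ^+ 2 + e.2 ^+ 2 =
      ((rho.1 - 1) ^+ 2 + rho.2 ^+ 2) * ((s0.1 - s1.1) ^+ 2 + (s0.2 - s1.2) ^+ 2).
      by rewrite /e /csub /cmul /=; ring.
    case: (eqVneq e.1 0) => h1; last by left.
    case: (eqVneq e.2 0) => h2; last by right.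
    exfalso; move: key; rewrite h1 h2 expr0n /= addr0 => /esym /eqP.
    by rewrite mulf_eq0 (negbTE hrho) (negbTE hd).
  pose pt (n : nat) : cplx R := (0 + n%:R * e.1, 0 + n%:R * e.2).
  have hpern n : G s1 (pt n) = G s1 (0, 0).
    elim: n => [|n IH]; first by rewrite /pt !mulr0n !mul0r !addr0.
    rewrite -IH (hper (pt n)); congr (G s1 _); rewrite /pt /=.
    by congr pair; rewrite -natr1; ring.
  have hlim := @dct0 R (F s1) (fun n x => W_SP sigma2 M (pt n) (0, 0) x)
    ((pi * sigma2)^-1) (fun n => @meas_W R M sigma2 (pt n)).
  have hG0 : G s1 (0, 0) = 0%E.
    have hlim' : (fun _ : nat => G s1 (0, 0)) @ \oo --> 0%E.
      have <- : (fun n => G s1 (pt n)) = fun _ : nat => G s1 (0, 0).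
        by apply: funext => n; exact: hpern.
      apply: hlim.
        by move=> n x; have /andP[/ltW -> ->] := @W_bnd R M M0 sigma2 hsigma (pt n) (0, 0) x.
      by move=> x; apply: W_cvg0.
    apply: (@cvg_unique _ _ ((fun _ : nat => G s1 (0, 0)) @ \oo)); [exact: ereal_hausdorff | exact: cvg_cst | exact: hlim'].
  have hip := @int_pos R (F s1) _ (@meas_W R M sigma2 (0, 0)).
  apply: hip; last exact: hG0.
  by move=> x; have /andP[-> _] := @W_bnd R M M0 sigma2 hsigma (0, 0) (0, 0) x.
split => //.
by move=> [F [hF _]]; apply: part1; exists F.
Qed.
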